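(* Let $t \geq 1$ be an integer and let $\mathcal{F}$ be a non-empty finite $t$-symmetric family of finite sets. Then \[\beta(\mathcal{F},t) = \frac{l(\mathcal{F},t)}{|\mathcal{F}|}.\]
   Context: A family $\mathcal{F}$ is $t$-symmetric if there is a group $\Gamma$ of bijections $\mathcal{F} \to \mathcal{F}$ such that for any $A, B \in \mathcal{F}$: (a) there exists $\delta \in \Gamma$ with $B = \delta(A)$; (b) if $|A \cap B| \geq t$ then $|\gamma(A) \cap \gamma(B)| \geq t$ for all $\gamma \in \Gamma$. A family $\mathcal{A}$ is $t$-intersecting if $|A \cap B| \geq t$ for all $A, B \in \mathcal{A}$ with $A \neq B$; $l(\mathcal{F},t)$ is the size of a largest $t$-intersecting sub-family of $\mathcal{F}$. For a family $\mathcal{A}$, $\mathcal{A}^{t,+} = \{A \in \mathcal{A} : |A \cap B| \geq t \text{ for all } B \in \mathcal{A}\setminus\{A\}\}$ and $\mathcal{A}^{t,-} = \mathcal{A} \setminus \mathcal{A}^{t,+}$. For $\mathcal{A} \subseteq \mathcal{F}$, $\beta(\mathcal{F},t,\mathcal{A}) = \frac{l(\mathcal{F},t) - |\mathcal{A}^{t,+}|}{|\mathcal{A}^{t,-}|}$ if $\mathcal{A}^{t,-} \neq \emptyset$, and $\frac{l(\mathcal{F},t)}{|\mathcal{F}|}$ otherwise; $\beta(\mathcal{F},t) = \min_{\mathcal{A} \subseteq \mathcal{F}} \beta(\mathcal{F},t,\mathcal{A})$. *)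

(* Defs.v *)
From HB Require Import structures.
From mathcomp Require Import all_boot all_order all_algebra all_fingroup.
Set Implicit Arguments. Unset Strict Implicit. Unset Printing Implicit Defensive.
Import Order.TTheory GRing.Theory Num.Theory.

(* A finite family of finite sets is modelled as F : {set {set T}} for a
   finite ground type T (the union of the members of F). *)

Local Open Scope ring_scope.
Section Defs.
Variable T : finType.

Definition memF (F : {set {set T}}) := {A : {set T} | A \in F}.

Definition t_intersecting (t : nat) (A : {set {set T}}) : bool :=
  [forall X in A, forall Y in A, (X != Y) ==> (t <= #|X :&: Y|)%N].

Definition lFt (F : {set {set T}}) (t : nat) : nat :=
  \max_(A in powerset F | t_intersecting t A) #|A|.

Definition Aplus (t : nat) (A : {set {set T}}) : {set {set T}} :=
  [set X in A | [forall Y in A, (Y != X) ==> (t <= #|X :&: Y|)%N]].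
Definition Aminus (t : nat) (A : {set {set T}}) : {set {set T}} :=
  A :\: Aplus t A.

Definition betaA (F : {set {set T}}) (t : nat) (A : {set {set T}}) : rat :=
  if Aminus t A != set0 then
    ((lFt F t)%:R - (#|Aplus t A|)%:R) / (#|Aminus t A|)%:R
  else (lFt F t)%:R / (#|F|)%:R.

(* beta(F,t) = min over subfamilies A of F (set0 is among them, so the
   seed value is attained). *)
Definition betaF (F : {set {set T}}) (t : nat) : rat :=
  \big[Num.min/betaA F t set0]_(A : {set {set T}} | A \subset F) betaA F t A.

Definition t_symmetric (t : nat) (F : {set {set T}}) : Prop :=
  exists G : {group {perm memF F}},
    (forall A B : memF F, exists2 g, g \in G & B = g A) /\
    (forall A B : memF F, (t <= #|val A :&: val B|)%N ->
       forall g, g \in G -> (t <= #|val (g A) :&: val (g B)|)%N).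

End Defs.

(* Main.v *)
Require Import Defs.
From HB Require Import structures.
From mathcomp Require Import all_boot all_order all_algebra all_fingroup.
From mathcomp Require Import lra zify.
Import Order.TTheory GRing.Theory Num.Theory.
Local Open Scope ring_scope.

Lemma cardI_sum (U : finType) (B C : {set U}) :
  #|B :&: C| = (\sum_(x in C) (x \in B))%N.
Proof.
rewrite -sum1_card big_mkcond [RHS]big_mkcond; apply: eq_bigr => x _.
by rewrite inE andbC; case: (x \in C); case: (x \in B).
Qed.

Lemma card_val (T : finType) (F B : {set {set T}}) :
  B \subset F -> #|[set A : memF F | val A \in B]| = #|B|.
Proof.
move=> hBF; rewrite -(card_imset _ val_inj).
suff -> : [set val x | x in [set A : memF F | val A \in B]] = B by [].
apply/setP => X; apply/imsetP/idP.
  by case=> A; rewrite inE => hA ->.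
move=> hX; exists (Sub X (subsetP hBF X hX) : memF F); by rewrite ?inE /=.
Qed.

Theorem corollary3p9 (T : finType) (F : {set {set T}}) (t : nat) :
  (1 <= t)%N -> F != set0 -> t_symmetric t F ->
  betaF F t = (lFt F t)%:R / (#|F|)%:R.
Proof.
move=> t1 Fn [G [Htr Hpres]].
set l := lFt F t.
have key : forall A : {set {set T}}, A \subset F -> Aminus t A != set0 ->
   (#|F| * #|Aplus t A| + #|Aminus t A| * l <= #|F| * l)%N.
  move=> A hAF hm.
  have [L /andP [LP Lti] Ll] : {L | (L \in powerset F) && t_intersecting t L & l = #|L|}.
    apply: eq_bigmax_cond; apply/card_gt0P; exists set0.
    rewrite unfold_in /= powersetE sub0set /=; apply/forall_inP => X; by rewrite inE.
  have LF : L \subset F by rewrite inE in LP.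
  set Lm := [set Y : memF F | val Y \in L].
  set Sm := [set Y : memF F | val Y \in Aminus t A].
  pose f (X : memF F) := #|[set g : {perm memF F} | X \in g @: Lm] :&: G|.
  have fle : forall X X', (f X <= f X')%N.
    move=> X X'; have [k kG ->] := Htr X X'.
    rewrite /f -(card_imset _ (mulIg k)); apply: subset_leq_card.
    apply/subsetP => h /imsetP [g]; rewrite !inE => /andP [/imsetP [Y YL ->] gG] ->.
    rewrite groupM // andbT; apply/imsetP; exists Y => //; by rewrite permM.
  have [x0 hx0] := set0Pn _ Fn.
  pose X0 := (Sub x0 hx0 : memF F).
  have fc : forall X, f X = f X0 by move=> X; apply/eqP; rewrite eqn_leq !fle.
  have AmA : forall Y, Y \in Aminus t A -> Y \in A.
    by move=> Y; rewrite /Aminus inE => /andP [].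
  have plusP : forall X Y, X \in Aplus t A -> Y \in A -> Y != X -> (t <= #|X :&: Y|)%N.
    move=> X Y; rewrite /Aplus inE => /andP [_ /forall_inP H] hY.
    by move/(implyP (H Y hY)).
  have ApA : Aplus t A \subset A.
    by apply/subsetP => X; rewrite /Aplus inE => /andP [].
  have step1 : forall g, g \in G -> (#|Aplus t A| + #|g @: Lm :&: Sm| <= l)%N.
    move=> g gG.
    set img := [set val Y | Y in g @: Lm :&: Sm].
    have imgA : img \subset Aminus t A.
      by apply/subsetP => X /imsetP [Y]; rewrite !inE => /andP [_ hY] ->.
    have disj : Aplus t A :&: img = set0.
      apply/setP => X; rewrite inE [X \in set0]inE; apply/negbTE/andP => [[h1 h2]].
      by have := subsetP imgA _ h2; rewrite /Aminus inE h1.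
    have cimg : #|img| = #|g @: Lm :&: Sm| by rewrite card_imset //; exact: val_inj.
    rewrite -cimg -[X in (X <= _)%N]subn0 -(cards0 {set T}) -disj -cardsU.
    rewrite /l /lFt; apply: (@leq_bigmax_cond _ (fun A0 : {set {set T}} => (A0 \in powerset F) && t_intersecting t A0) (fun A0 : {set {set T}} => #|A0|)).
    apply/andP; split.
      rewrite powersetE subUset; apply/andP; split.
        exact: subset_trans ApA hAF.
      by apply/subsetP => X /imsetP [Y _ ->]; exact: valP Y.
    apply/forall_inP => X hX; apply/forall_inP => Y hY; apply/implyP => XY.
    rewrite inE in hX; rewrite inE in hY.
    case/orP: hX => hX; case/orP: hY => hY.
    - by apply: plusP hX _ _; [exact: subsetP ApA _ hY | rewrite eq_sym].
    - by apply: plusP hX _ _; [exact: AmA (subsetP imgA _ hY) | rewrite eq_sym].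
    - by rewrite setIC; apply: plusP hY _ _; [exact: AmA (subsetP imgA _ hX) | ].
    move: hX hY XY => /imsetP [X1 hX1 ->] /imsetP [Y1 hY1 ->] XY.
    rewrite inE in hX1; rewrite inE in hY1.
    case/andP: hX1 => /imsetP [U UL eU] _; case/andP: hY1 => /imsetP [V VL eV] _; rewrite eU eV in XY *.
    apply: Hpres gG.
    rewrite inE in UL; rewrite inE in VL.
    move/forall_inP: Lti => /(_ _ UL) /forall_inP /(_ _ VL) /implyP; apply.
    by apply: contraNneq XY => /val_inj ->.
  have step3 : (\sum_(g in G) #|g @: Lm :&: Sm| = #|Sm| * f X0)%N.
    rewrite (eq_bigr (fun g : {perm memF F} => \sum_(X in Sm) (X \in g @: Lm))%N); last by move=> g _; rewrite cardI_sum.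
    rewrite exchange_big /= -sum_nat_const; apply: eq_bigr => X _.
    by rewrite -(fc X) /f cardI_sum; apply: eq_bigr => g _; rewrite inE.
  have step4 : (#|F| * f X0 = #|G| * #|L|)%N.
    have cF : #|F| = #|[set: memF F]|.
      rewrite -(@card_val _ F F (subxx F)); suff -> : [set A : memF F | val A \in F] = [set: memF F] by [].
      by apply/setP => X; rewrite !inE; exact: valP X.
    rewrite cF -sum_nat_const (eq_bigr f); last by move=> X _; rewrite fc.
    rewrite (eq_bigr (fun X => \sum_(g in G) (X \in g @: Lm))%N); last first.
      by move=> X _; rewrite /f cardI_sum; apply: eq_bigr => g _; rewrite inE.
    rewrite exchange_big /= -(@card_val _ F L LF) -/Lm -sum_nat_const; apply: eq_bigr => g _.
    by rewrite -cardI_sum setIT card_imset //; exact: perm_inj.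
  have step2 : (#|G| * #|Aplus t A| + #|Sm| * f X0 <= #|G| * l)%N.
    rewrite -step3 -sum_nat_const -big_split /=.
    by rewrite -sum_nat_const; apply: leq_sum.
  have Smc : #|Sm| = #|Aminus t A|.
    by apply: card_val; apply: subset_trans hAF; apply: subsetDl.
  rewrite Smc in step2.
  have Gpos := cardG_gt0 G.
  rewrite -(leq_pmul2l Gpos).
  rewrite -Ll in step4.
  nia.
have Fpos : (0 < #|F|)%N by rewrite card_gt0.
have ge : forall A : {set {set T}}, A \subset F -> l%:R / #|F|%:R <= betaA F t A.
  move=> A hA; rewrite /betaA; case: ifP => hm //.
  have mpos : (0 < #|Aminus t A|)%N by rewrite card_gt0.
  have hk := key A hA hm.
  have ha : (#|Aplus t A| <= l)%N.
    have : (#|F| * #|Aplus t A| <= #|F| * l)%N by apply: leq_trans hk; exact: leq_addr.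
    by rewrite leq_pmul2l.
  rewrite ler_pdivlMr ?ltr0n // mulrAC ler_pdivrMr ?ltr0n // .
  move: hk; rewrite -(ler_nat rat) natrD !natrM => hk.
  rewrite mulrBl. lra.
have e0 : betaA F t set0 = l%:R / #|F|%:R.
  by rewrite /betaA /Aminus set0D eqxx.
apply/le_anti/andP; split.
  rewrite /betaF; apply: (big_rec (fun x : rat => x <= l%:R / #|F|%:R)) => [|i x _ hx]; first by rewrite e0.
  by rewrite ge_min hx orbT.
rewrite /betaF; apply: (big_rec (fun x : rat => l%:R / #|F|%:R <= x)) => [|i x hi hx]; first by rewrite e0.
by rewrite le_min hx ge.
Qed.
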